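(* Let $\alpha$ be a regular cardinal, let $e_X:P\to X$ be an $\alpha$-supported meet-extension, let $Q$ be a poset and $f:P\to Q$ an order-preserving map. Define a partial map $f_X:X\to Q$ by $f_X(x)=\bigwedge f[e_X^{-1}(x^\uparrow)]$ when this meet exists in $Q$, and undefined otherwise; let $\mathrm{dom}(f_X)$ be its domain, with the order inherited from $X$. Then: (1) $f_X$ is order-preserving, $e_X[P]\subseteq\mathrm{dom}(f_X)$, and $f_X\circ e_X=f$. (2) Suppose $f$ is $(\alpha,e_X)$-continuous. Then: (a) if $Z\subseteq\mathrm{dom}(f_X)$ with $|Z|<\alpha$, $\bigwedge Z$ exists in $X$, and $Z$ has a greatest lower bound $b$ in $\mathrm{dom}(f_X)$, then $b=\bigwedge Z$; (b) $f_X$ is $\alpha$-meet-preserving on $\mathrm{dom}(f_X)$, i.e. whenever $Z\subseteq\mathrm{dom}(f_X)$ with $|Z|<\alpha$ has a greatest lower bound $b$ in $\mathrm{dom}(f_X)$, then $f_X(b)=\bigwedge f_X[Z]$ in $Q$; (c) if $g:X\to Q$ is a partial map whose domain contains $e_X[P]$, which is $\alpha$-meet-preserving on its domain (i.e. whenever $Z\subseteq\mathrm{dom}(g)$, $|Z|<\alpha$, has a greatest lower bound $b$ in $\mathrm{dom}(g)$, then $g(b)=\bigwedge g[Z]$), and which satisfies $g\circ e_X=f$, then $g(x)=f_X(x)$ for all $x\in\mathrm{dom}(f_X)\cap\mathrm{dom}(g)$.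
   Context: For $q$ in a poset, $q^\uparrow=\{q'\ge q\}$; for $S\subseteq P$, $S^\uparrow=\{p:p\ge s\text{ for some }s\in S\}$; $e^{-1}(Z)=\{p:e(p)\in Z\}$. A meet-extension is an order-embedding $e:P\to X$ with $x=\bigwedge e[e^{-1}(x^\uparrow)]$ for all $x\in X$. It is $\alpha$-supported if for every $x\in X$ there is $S\subseteq P$ with $|S|<\alpha$ and $x=\bigwedge e_X[S]$. An order-preserving $f:P\to Q$ is $(\alpha,e_X)$-continuous if for all $q\in Q$ and all $S\subseteq f^{-1}(q^\uparrow)$ with $|S|<\alpha$ there are $q_S\in Q$, $x_S\in X$ with $\bigwedge f[S]=q_S=\bigwedge f[e_X^{-1}(x_S^\uparrow)]$ and $S^\uparrow\subseteq e_X^{-1}(x_S^\uparrow)$. *)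

(* Defs.v *)
Set Implicit Arguments.

Definition card_le (A B : Type) : Prop :=
  exists f : A -> B, forall x y, f x = f y -> x = y.

Definition card_lt (A B : Type) : Prop := card_le A B /\ ~ card_le B A.

(* |S| < alpha, where the cardinal alpha is represented by a type K *)
Definition small {T : Type} (S : T -> Prop) (K : Type) : Prop :=
  card_lt {x : T | S x} K.

Definition regular (K : Type) : Prop :=
  card_le nat K /\
  forall (T I : Type) (F : I -> T -> Prop),
    card_lt I K -> (forall i, small (F i) K) ->
    small (fun x => exists i, F i x) K.

Definition is_poset {T : Type} (le : T -> T -> Prop) : Prop :=
  (forall x, le x x) /\
  (forall x y, le x y -> le y x -> x = y) /\
  (forall x y z, le x y -> le y z -> le x z).

Definition up {T : Type} (le : T -> T -> Prop) (q : T) : T -> Prop :=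
  fun q' => le q q'.

Definition up_set {T : Type} (le : T -> T -> Prop) (S : T -> Prop) : T -> Prop :=
  fun p => exists s, S s /\ le s p.

Definition image {A B : Type} (f : A -> B) (S : A -> Prop) : B -> Prop :=
  fun b => exists a, S a /\ f a = b.

Definition preimage {A B : Type} (f : A -> B) (Z : B -> Prop) : A -> Prop :=
  fun a => Z (f a).

Definition subset {T : Type} (A B : T -> Prop) : Prop := forall x, A x -> B x.

Definition is_glb {T : Type} (le : T -> T -> Prop) (S : T -> Prop) (m : T) : Prop :=
  (forall s, S s -> le m s) /\
  (forall b, (forall s, S s -> le b s) -> le b m).

Definition is_glb_in {T : Type} (le : T -> T -> Prop) (D S : T -> Prop) (m : T) : Prop :=
  D m /\ (forall s, S s -> le m s) /\
  (forall b, D b -> (forall s, S s -> le b s) -> le b m).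

Definition order_embedding {A B : Type} (leA : A -> A -> Prop) (leB : B -> B -> Prop)
  (e : A -> B) : Prop :=
  forall p q, leB (e p) (e q) <-> leA p q.

Definition order_preserving {A B : Type} (leA : A -> A -> Prop) (leB : B -> B -> Prop)
  (f : A -> B) : Prop :=
  forall p q, leA p q -> leB (f p) (f q).

Definition meet_extension {P X : Type} (leP : P -> P -> Prop) (leX : X -> X -> Prop)
  (e : P -> X) : Prop :=
  order_embedding leP leX e /\
  forall x, is_glb leX (image e (preimage e (up leX x))) x.

Definition alpha_supported {P X : Type} (K : Type) (leX : X -> X -> Prop) (e : P -> X) : Prop :=
  forall x, exists S : P -> Prop, small S K /\ is_glb leX (image e S) x.

Definition alpha_e_continuous {P X Q : Type} (K : Type)
  (leP : P -> P -> Prop) (leX : X -> X -> Prop) (leQ : Q -> Q -> Prop)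
  (e : P -> X) (f : P -> Q) : Prop :=
  order_preserving leP leQ f /\
  forall (q : Q) (S : P -> Prop),
    subset S (preimage f (up leQ q)) -> small S K ->
    exists (qS : Q) (xS : X),
      is_glb leQ (image f S) qS /\
      is_glb leQ (image f (preimage e (up leX xS))) qS /\
      subset (up_set leP S) (preimage e (up leX xS)).

(* ---------- partial maps, as functional relations ---------- *)
Definition pmap (X Q : Type) := X -> Q -> Prop.

Definition functional {X Q : Type} (g : pmap X Q) : Prop :=
  forall x q q', g x q -> g x q' -> q = q'.

Definition pdom {X Q : Type} (g : pmap X Q) : X -> Prop := fun x => exists q, g x q.

Definition pimage {X Q : Type} (g : pmap X Q) (Z : X -> Prop) : Q -> Prop :=
  fun q => exists z, Z z /\ g z q.

Definition fX {P X Q : Type} (leX : X -> X -> Prop) (leQ : Q -> Q -> Prop)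
  (e : P -> X) (f : P -> Q) : pmap X Q :=
  fun x q => is_glb leQ (image f (preimage e (up leX x))) q.

Definition alpha_meet_preserving {X Q : Type} (K : Type)
  (leX : X -> X -> Prop) (leQ : Q -> Q -> Prop) (g : pmap X Q) : Prop :=
  forall (Z : X -> Prop) (b : X),
    subset Z (pdom g) -> small Z K -> is_glb_in leX (pdom g) Z b ->
    forall qb, g b qb -> is_glb leQ (pimage g Z) qb.

(* Main.v *)
Require Import Defs.
From Stdlib Require Import IndefiniteDescription ProofIrrelevance.

Lemma glb_unique {T} (le : T -> T -> Prop) (S : T -> Prop) a b :
  is_poset le -> is_glb le S a -> is_glb le S b -> a = b.
Proof.
  intros [_ [Ha _]] [A1 A2] [B1 B2]. apply Ha; [apply B2 | apply A2]; assumption.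
Qed.

Lemma card_lt_trans_le (A B K : Type) : card_le A B -> card_lt B K -> card_lt A K.
Proof.
  intros [g Hg] [[h Hh] Hn]. split.
  - exists (fun a => h (g a)). intros x y E. apply Hg, Hh, E.
  - intros [k Hk]. apply Hn. exists (fun c => g (k c)). intros x y E. apply Hk, Hg, E.
Qed.

Lemma small_image {A B} (e : A -> B) (S : A -> Prop) K :
  small S K -> small (image e S) K.
Proof.
  intros H. unfold small in *. apply (card_lt_trans_le _ {x : A | S x} K); auto.
  assert (Hc : forall y : {y : B | image e S y}, {a : A | S a /\ e a = proj1_sig y}).
  { intros [y Hy]. apply constructive_indefinite_description. exact Hy. }
  exists (fun y => exist _ (proj1_sig (Hc y)) (proj1 (proj2_sig (Hc y)))).
  intros x y E. injection E as E.
  assert (Ex := proj2 (proj2_sig (Hc x))).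
  assert (Ey := proj2 (proj2_sig (Hc y))).
  rewrite E in Ex. rewrite Ex in Ey.
  destruct x as [x Hx], y as [y Hy]. simpl in Ey.
  subst y. f_equal. apply proof_irrelevance.
Qed.

Section Main.
Variables (K : Type) (P X Q : Type)
  (leP : P -> P -> Prop) (leX : X -> X -> Prop) (leQ : Q -> Q -> Prop)
  (HP : is_poset leP) (HX : is_poset leX) (HQ : is_poset leQ)
  (e : P -> X) (f : P -> Q)
  (Hreg : regular K)
  (Hext : meet_extension leP leX e)
  (Hsupp : alpha_supported K leX e)
  (Hf : order_preserving leP leQ f).

Lemma fX_mono : forall x y qx qy, fX leX leQ e f x qx -> fX leX leQ e f y qy ->
       leX x y -> leQ qx qy.
Proof.
  intros x y qx qy [A1 A2] [B1 B2] Hxy. apply B2.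
  intros s [p [Hp Es]]. subst s. apply A1. exists p. split; auto.
  unfold preimage, up in *. destruct HX as [_ [_ T]]. eauto.
Qed.

Lemma fX_e : forall p, fX leX leQ e f (e p) (f p).
Proof.
  intros p. destruct Hext as [Hemb _]. split.
  - intros s [p' [Hp' Es]]. subst s. apply Hf. apply Hemb. exact Hp'.
  - intros b Hb. apply Hb. exists p. split; auto. unfold preimage, up.
    destruct HX as [R _]. apply R.
Qed.

Lemma key (Hc : alpha_e_continuous K leP leX leQ e f)
  (Z : X -> Prop) (q0 : Q) :
  subset Z (pdom (fX leX leQ e f)) -> small Z K ->
  (forall z qz, Z z -> fX leX leQ e f z qz -> leQ q0 qz) ->
  exists xS qS, fX leX leQ e f xS qS /\ (forall z, Z z -> leX xS z) /\
    (forall c, (forall z qz, Z z -> fX leX leQ e f z qz -> leQ c qz) -> leQ c qS).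
Proof.
  intros HZ Hs Hq0.
  assert (Hsf : forall i : {z : X | Z z},
     {S : P -> Prop | small S K /\ is_glb leX (image e S) (proj1_sig i)}).
  { intros i. apply constructive_indefinite_description. apply Hsupp. }
  set (S := fun p => exists i, proj1_sig (Hsf i) p).
  assert (HsS : small S K).
  { destruct Hreg as [_ R]. apply R. exact Hs. intros i. apply (proj1 (proj2_sig (Hsf i))). }
  destruct HQ as [QR [QA QT]]. destruct HX as [XR [XA XT]].
  assert (HSz : forall p, S p -> exists z qz, Z z /\ fX leX leQ e f z qz /\ leQ qz (f p)).
  { intros p [i Hi]. destruct i as [z Hz]. simpl in *.
    destruct (proj2_sig (Hsf (exist _ z Hz))) as [_ [G1 _]].
    destruct (HZ z Hz) as [qz Hqz]. exists z, qz. split; [auto|split; auto].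
    apply (proj1 Hqz). exists p. split; auto. unfold preimage, up.
    apply G1. exists p. split; auto. }
  destruct Hc as [_ Hc].
  destruct (Hc q0 S) as [qS [xS [H1 [H2 H3]]]]; auto.
  { intros p Hp. destruct (HSz p Hp) as [z [qz [Hz [Hfz Hle]]]].
    unfold preimage, up. eapply QT; [apply (Hq0 z qz Hz Hfz) | exact Hle]. }
  exists xS, qS. split; [exact H2|split].
  - intros z Hz. destruct (proj2_sig (Hsf (exist _ z Hz))) as [_ [_ G2]].
    simpl in G2. apply G2. intros s [p [Hp Es]]. subst s.
    apply (H3 p). exists p. split; [exists (exist _ z Hz); exact Hp | apply (proj1 HP)].
  - intros c Hcz. apply (proj2 H1). intros s [p [Hp Es]]. subst s.
    destruct (HSz p Hp) as [z [qz [Hz [Hfz Hle]]]]. eapply QT; [apply (Hcz z qz Hz Hfz)|exact Hle].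
Qed.

End Main.

Theorem proposition7p4 (K : Type) (P X Q : Type)
  (leP : P -> P -> Prop) (leX : X -> X -> Prop) (leQ : Q -> Q -> Prop)
  (HP : is_poset leP) (HX : is_poset leX) (HQ : is_poset leQ)
  (e : P -> X) (f : P -> Q)
  (Hreg : regular K)
  (Hext : meet_extension leP leX e)
  (Hsupp : alpha_supported K leX e)
  (Hf : order_preserving leP leQ f) :
  (* (1) *)
  ((forall x y qx qy, fX leX leQ e f x qx -> fX leX leQ e f y qy ->
       leX x y -> leQ qx qy) /\
   (forall p, pdom (fX leX leQ e f) (e p)) /\
   (forall p, fX leX leQ e f (e p) (f p)))
  /\
  (* (2) *)
  (alpha_e_continuous K leP leX leQ e f ->
    (* (a) *)
    (forall (Z : X -> Prop) (m b : X),
       subset Z (pdom (fX leX leQ e f)) -> small Z K ->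
       is_glb leX Z m ->
       is_glb_in leX (pdom (fX leX leQ e f)) Z b ->
       b = m) /\
    (* (b) *)
    alpha_meet_preserving K leX leQ (fX leX leQ e f) /\
    (* (c) *)
    (forall g : pmap X Q,
       functional g ->
       (forall p, pdom g (e p)) ->
       alpha_meet_preserving K leX leQ g ->
       (forall p, g (e p) (f p)) ->
       forall x q1 q2, fX leX leQ e f x q1 -> g x q2 -> q1 = q2)).
Proof.
  pose proof (@fX_mono P X Q leX leQ HX e f) as Mono.
  pose proof (@fX_e P X Q leP leX leQ HX e f Hext Hf) as FE.
  split.
  { split; [exact Mono | split; [intros p; exists (f p); apply FE | exact FE]]. }
  intros Hc.
  destruct HQ as [QR [QA QT]] eqn:HQe. destruct HX as [XR [XA XT]] eqn:HXe.
  split; [|split].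
  - intros Z m b HZ Hs Hm [Hbd [Hb1 Hb2]].
    destruct Hbd as [qb Hqb].
    destruct (@key K P X Q leP leX leQ HP HX HQ e f Hreg Hsupp Hc Z qb HZ Hs)
      as [xS [qS [HxS [HxSz Hmax]]]].
    { intros z qz Hz Hqz. eapply Mono; eauto. }
    assert (HxSm : leX xS m) by (apply (proj2 Hm); exact HxSz).
    assert (Hfm : fX leX leQ e f m qS).
    { split.
      - intros s [p [Hp Es]]. subst s. apply (proj1 HxS). exists p. split; auto.
        unfold preimage, up in *. eauto.
      - intros c Hcl. apply Hmax. intros z qz Hz Hqz. apply (proj2 Hqz).
        intros s [p [Hp Es]]. subst s. apply Hcl. exists p. split; auto.
        unfold preimage, up in *. eapply XT; [apply (proj1 Hm z Hz)|exact Hp]. }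
    apply XA.
    + apply (proj2 Hm). exact Hb1.
    + apply Hb2; [exists qS; exact Hfm | apply (proj1 Hm)].
  - intros Z b HZ Hs [Hbd [Hb1 Hb2]] qb Hqb.
    destruct (@key K P X Q leP leX leQ HP HX HQ e f Hreg Hsupp Hc Z qb HZ Hs)
      as [xS [qS [HxS [HxSz Hmax]]]].
    { intros z qz Hz Hqz. eapply Mono; eauto. }
    split.
    + intros q [z [Hz Hqz]]. eapply Mono; eauto.
    + intros c Hcl. eapply QT.
      * apply Hmax. intros z qz Hz Hqz. apply Hcl. exists z. split; auto.
      * eapply Mono; [exact HxS | exact Hqb | apply Hb2; [exists qS; exact HxS | exact HxSz]].
  - intros g Hfun Hdom Hmp Hge x q1 q2 Hq1 Hq2.
    destruct (Hsupp x) as [Sx [HsS [G1 G2]]].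
    assert (Hglb : is_glb leQ (pimage g (image e Sx)) q2).
    { apply (Hmp (image e Sx) x).
      - intros y [p [Hp Ey]]. subst y. apply Hdom.
      - apply small_image. exact HsS.
      - split; [exists q2; exact Hq2 | split; auto].
      - exact Hq2. }
    assert (HSx : forall p, Sx p -> leX x (e p)).
    { intros p Hp. apply G1. exists p. auto. }
    destruct Hc as [_ Hc].
    destruct (Hc q1 Sx) as [qS [xS [H1 [H2 H3]]]]; auto.
    { intros p Hp. apply (proj1 Hq1). exists p. split; auto. apply HSx, Hp. }
    assert (E2 : qS = q2).
    { apply (glb_unique _ _ _ _ HQ H1). split.
      - intros s [p [Hp Es]]. subst s. apply (proj1 Hglb). exists (e p). split.
        + exists p. auto.
        + apply Hge.
      - intros c Hcl. apply (proj2 Hglb). intros q [y [[p [Hp Ey]] Hgy]]. subst y.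
        rewrite (Hfun _ _ _ Hgy (Hge p)). apply Hcl. exists p. auto. }
    subst q2.
    assert (HxSx : leX xS x).
    { apply G2. intros s [p [Hp Es]]. subst s. apply (H3 p). exists p. split; auto. apply (proj1 HP). }
    apply QA.
    + apply (proj2 H1). intros s [p [Hp Es]]. subst s. apply (proj1 Hq1). exists p.
      split; auto. apply HSx, Hp.
    + apply (proj2 Hq1). intros s [p [Hp Es]]. subst s. apply (proj1 H2). exists p.
      split; auto. unfold preimage, up in *. eauto.
Qed.
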